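(* For every $k\ge1$, the derived subgroup $B_k'$ is contained in $G_k$, i.e. $B_k'\le G_k$.
   Context: Let $C_2=\{e,\sigma\}$ with $\sigma=(1,2)$. Define $B_1=C_2$ and $B_k=B_{k-1}\wr C_2$ for $k>1$, with elements written as wreath recursions $(g_1,g_2)\pi$, $g_1,g_2\in B_{k-1}$, $\pi\in C_2$, and multiplication $(g_1,g_2)\pi\cdot(h_1,h_2)\rho=(g_1h_{\pi(1)},g_2h_{\pi(2)})\pi\rho$ (so $B_k$ is the group of automorphisms of the binary rooted tree with $k$ levels, $B_k\cong\mathrm{Syl}_2 S_{2^k}$). Define $G_1=\{e\}$ and, for $k>1$, $G_k=\{(g_1,g_2)\pi\in B_k : g_1g_2\in G_{k-1}\}$. *)

(* Defs.v *)
(* the iterated wreath products B_k, encoded literally as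
   wreath recursions (g1, g2, pi), with pi = true standing for sigma = (1 2). *)

(* Bt k = B_k for k >= 1; Bt 0 = trivial group, so Bt 1 = B_0 wr C_2 = C_2. *)
Fixpoint Bt (k : nat) : Type :=
  match k with
  | 0 => unit
  | S k' => (Bt k' * Bt k' * bool)%type
  end.

Fixpoint one (k : nat) : Bt k :=
  match k return Bt k with
  | 0 => tt
  | S k' => (one k', one k', false)
  end.

Fixpoint mul (k : nat) : Bt k -> Bt k -> Bt k :=
  match k return Bt k -> Bt k -> Bt k with
  | 0 => fun _ _ => tt
  | S k' => fun x y =>
      let '(g1, g2, p) := x in
      let '(h1, h2, r) := y in
      if p then (mul k' g1 h2, mul k' g2 h1, xorb p r)
      else (mul k' g1 h1, mul k' g2 h2, xorb p r)
  end.

Fixpoint inv (k : nat) : Bt k -> Bt k :=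
  match k return Bt k -> Bt k with
  | 0 => fun _ => tt
  | S k' => fun x =>
      let '(g1, g2, p) := x in
      if p then (inv k' g2, inv k' g1, p) else (inv k' g1, inv k' g2, p)
  end.

Definition comm (k : nat) (a b : Bt k) : Bt k :=
  mul k (mul k (inv k a) (inv k b)) (mul k a b).

Inductive derived (k : nat) : Bt k -> Prop :=
  | derived_comm : forall a b, derived k (comm k a b)
  | derived_one : derived k (one k)
  | derived_mul : forall x y, derived k x -> derived k y -> derived k (mul k x y)
  | derived_inv : forall x, derived k x -> derived k (inv k x).

(* G_1 = {e};  G_k = {(g1,g2)pi : g1 g2 in G_{k-1}} for k > 1.
   (Gp 0 is irrelevant.) *)
Fixpoint Gp (k : nat) : Bt k -> Prop :=
  match k return Bt k -> Prop with
  | 0 => fun _ => True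
  | S k' => fun x =>
      match k' with
      | 0 => x = one (S k')
      | _ => Gp k' (mul k' (fst (fst x)) (snd (fst x)))
      end
  end.

(* Main.v *)
Require Import Defs.
From Stdlib Require Import Bool Lia.

Fixpoint psi (k : nat) : Bt k -> bool :=
  match k return Bt k -> bool with
  | 0 => fun _ => false
  | S k' => fun x =>
      let '(g1, g2, p) := x in
      if Nat.eqb k' 0 then p else xorb (psi k' g1) (psi k' g2)
  end.

Lemma psi_SS : forall k g1 g2 p, psi (S (S k)) (g1, g2, p) = xorb (psi (S k) g1) (psi (S k) g2).
Proof. reflexivity. Qed.
Lemma mul_S : forall k g1 g2 p h1 h2 r, mul (S k) (g1, g2, p) (h1, h2, r) =
  if p then (mul k g1 h2, mul k g2 h1, xorb p r) else (mul k g1 h1, mul k g2 h2, xorb p r).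
Proof. reflexivity. Qed.
Lemma inv_S : forall k g1 g2 p, inv (S k) (g1, g2, p) =
  if p then (inv k g2, inv k g1, p) else (inv k g1, inv k g2, p).
Proof. reflexivity. Qed.

Lemma psi_mul : forall k x y, psi k (mul k x y) = xorb (psi k x) (psi k y).
Proof.
  induction k as [|k IH]; [reflexivity|].
  intros [[g1 g2] p] [[h1 h2] r].
  destruct k as [|k].
  - destruct p; reflexivity.
  - rewrite mul_S; destruct p; rewrite !psi_SS;
    rewrite !IH; destruct (psi (S k) g1), (psi (S k) g2), (psi (S k) h1), (psi (S k) h2); reflexivity.
Qed.

Lemma psi_inv : forall k x, psi k (inv k x) = psi k x.
Proof.
  induction k as [|k IH]; [reflexivity|].
  intros [[g1 g2] p].
  destruct k as [|k].
  - destruct p; reflexivity.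
  - rewrite inv_S; destruct p; rewrite !psi_SS, !IH;
    destruct (psi (S k) g1), (psi (S k) g2); reflexivity.
Qed.

Lemma psi_one : forall k, psi k (one k) = false.
Proof.
  induction k as [|k IH]; [reflexivity|].
  destruct k as [|k]; [reflexivity|]. change (one (S (S k))) with (one (S k), one (S k), false). rewrite psi_SS, IH. reflexivity.
Qed.

Lemma psi_derived : forall k x, derived k x -> psi k x = false.
Proof.
  intros k x H; induction H.
  - unfold comm. rewrite !psi_mul, !psi_inv.
    destruct (psi k a), (psi k b); reflexivity.
  - apply psi_one.
  - rewrite psi_mul, IHderived1, IHderived2; reflexivity.
  - rewrite psi_inv; assumption.
Qed.

Lemma psi_Gp : forall k, 1 <= k -> forall x, psi k x = false -> Gp k x.
Proof.
  induction k as [|k IH]; intros Hk; [lia|].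
  intros [[g1 g2] p] H.
  destruct k as [|k].
  - destruct g1, g2; simpl in H; subst p; reflexivity.
  - change (Gp (S k) (mul (S k) g1 g2)). apply IH; [lia|]. rewrite psi_mul. rewrite psi_SS in H. exact H.
Qed.

Theorem mainTheorem9 : forall (k : nat), 1 <= k ->
  forall x : Bt k, derived k x -> Gp k x.
Proof.
  intros k Hk x H. apply psi_Gp; [exact Hk|]. apply psi_derived; exact H.
Qed.
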